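(* The GP 2 program is-dag terminates on any GP 2 host graph in which every node is marked grey and is not a root and every edge is unmarked.
   Context: GP 2 semantics. Host graphs are finite directed graphs whose nodes and edges carry labels (lists of integers and strings) and marks (nodes: unmarked, red, green, blue, grey; edges: unmarked, red, green, blue, dashed); some nodes are roots. A rule is applied by finding an injective label- and mark-compatible match of its left-hand side (mark ''any'' matches every mark; roots match roots) satisfying the dangling condition, then changing matched items as prescribed by the right-hand side. Commands: a rule set call applies one applicable rule, failing if none applies; $P;Q$ sequencing; $P!$ iterates $P$ until it fails (break exits the innermost loop); ''try $C$ then $P$ else $Q$'' runs $C$ and continues with $P$ on its result if it succeeded, else $Q$ on the original graph; ''if $C$ then $P$ else $Q$'' runs $C$ on a copy then $P$ or $Q$ on the original; fail causes failure. The program is-dag (labels unchanged; rule edges directed from node 1 to node 2): Main = (init; DFS!; try unroot else break)!; Check DFS = try next_edge then (try {move, ignore} else (set_flag; break)) else (try loop; try back else break) Check = if flag then fail - init: grey non-root node becomes a red root. - unroot: red root becomes blue non-root. - set_flag: red root becomes green root. - flag: green root; no change. - next_edge: red root 1, node 2 of any mark, unmarked edge 1→2; edge becomes red. - ignore: red root 1, blue node 2, red edge 1→2; edge becomes blue. - move: red root 1, grey node 2, red edge 1→2; node 1 becomes red non-root, node 2 red root, edge dashed. - back: red non-root 1, red root 2, dashed edge 1→2; node 1 becomes red root, node 2 blue non-root, edge blue. - loop: red root with an unmarked loop; node becomes green root. *)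

(* Defs.v *)
From mathcomp Require Import all_boot.
From Stdlib Require Strings.String.
From Stdlib Require List.

Set Implicit Arguments.
Unset Strict Implicit.
Unset Printing Implicit Defensive.

Inductive atom := AInt of BinNums.Z | AStr of Strings.String.string.
Definition label := seq atom.

Inductive nmark := NUnmarked | NRed | NGreen | NBlue | NGrey.
Inductive emark := EUnmarked | ERed | EGreen | EBlue | EDashed.

(** None of the rules
    of is-dag adds or deletes items or changes labels, so this part is fixed
    during execution. *)
Record hgraph (V E : finType) := HGraph {
  src : E -> V; tgt : E -> V; nlab : V -> label; elab : E -> label }.

Record state (V E : Type) := St {
  nm : V -> nmark; rt : V -> bool; em : E -> emark }.

(** Rule node: LHS mark (None = "any"), LHS root flag, RHS mark
    (None = unchanged, only used with "any"), RHS root flag. *)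
Record nspec := NSpec { ln : option nmark; lr : bool; rn : option nmark; rr : bool }.
Record espec := ESpec { le : emark; re : emark }.

(** Rules (preserving all items and labels, label patterns are variables):
    one node; one node with a loop; two distinct nodes 1,2 with edge 1 -> 2. *)
Inductive rule :=
| Rule1 of nspec
| RuleLoop of nspec & espec
| Rule2 of nspec & nspec & espec.

Inductive cmd :=
| Call of seq rule
| Seq of cmd & cmd
| Alap of cmd               (* P! *)
| Try of cmd & cmd & cmd    (* try C then P else Q *)
| If of cmd & cmd & cmd     (* if C then P else Q *)
| Skip | Break | Fail.

Section Semantics.
Variables (V E : finType) (G : hgraph V E).

(* A LHS node matches a host node: marks compatible (any matches all),
   LHS roots match only roots (non-root LHS nodes match any node). *)
Definition nmatch (ns : nspec) (s : state V E) (v : V) : Prop :=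
  (if ln ns is Some m then nm s v = m else True) /\ (lr ns -> rt s v).

(* Rootedness changes only where LHS and RHS differ. *)
Definition upd_node (ns : nspec) (v : V) (s : state V E) : state V E :=
  St (fun x => if x == v then (if rn ns is Some m then m else nm s v) else nm s x)
     (fun x => if x == v then (if lr ns == rr ns then rt s v else rr ns) else rt s x)
     (em s).

Definition upd_edge (es : espec) (e : E) (s : state V E) : state V E :=
  St (nm s) (rt s) (fun x => if x == e then re es else em s x).

(* One application of a rule (injective match; dangling condition is vacuous
   as no item is deleted). *)
Inductive apply_rule : rule -> state V E -> state V E -> Prop :=
| AR1 ns s v : nmatch ns s v -> apply_rule (Rule1 ns) s (upd_node ns v s)
| ARLoop ns es s v e :
    nmatch ns s v -> src G e = v -> tgt G e = v -> em s e = le es ->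
    apply_rule (RuleLoop ns es) s (upd_edge es e (upd_node ns v s))
| AR2 n1 n2 es s v1 v2 e :
    v1 != v2 -> nmatch n1 s v1 -> nmatch n2 s v2 ->
    src G e = v1 -> tgt G e = v2 -> em s e = le es ->
    apply_rule (Rule2 n1 n2 es) s (upd_edge es e (upd_node n2 v2 (upd_node n1 v1 s))).

Inductive outcome := Ok of state V E | Failed | Brk of state V E.

Inductive eval : cmd -> state V E -> outcome -> Prop :=
| E_call rs r s s' : List.In r rs -> apply_rule r s s' -> eval (Call rs) s (Ok s')
| E_callF rs s : (forall r s', List.In r rs -> ~ apply_rule r s s') -> eval (Call rs) s Failed
| E_seqOk c1 c2 s s1 o : eval c1 s (Ok s1) -> eval c2 s1 o -> eval (Seq c1 c2) s o
| E_seqF c1 c2 s : eval c1 s Failed -> eval (Seq c1 c2) s Failed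
| E_seqB c1 c2 s s1 : eval c1 s (Brk s1) -> eval (Seq c1 c2) s (Brk s1)
| E_alapOk c s s1 o : eval c s (Ok s1) -> eval (Alap c) s1 o -> eval (Alap c) s o
| E_alapF c s : eval c s Failed -> eval (Alap c) s (Ok s)
| E_alapB c s s1 : eval c s (Brk s1) -> eval (Alap c) s (Ok s1)
| E_tryOk c p q s s1 o : eval c s (Ok s1) -> eval p s1 o -> eval (Try c p q) s o
| E_tryF c p q s o : eval c s Failed -> eval q s o -> eval (Try c p q) s o
| E_tryB c p q s s1 : eval c s (Brk s1) -> eval (Try c p q) s (Brk s1)
| E_ifOk c p q s s1 o : eval c s (Ok s1) -> eval p s o -> eval (If c p q) s o
| E_ifF c p q s o : eval c s Failed -> eval q s o -> eval (If c p q) s o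
| E_ifB c p q s s1 : eval c s (Brk s1) -> eval (If c p q) s (Brk s1)
| E_skip s : eval Skip s (Ok s)
| E_break s : eval Break s (Brk s)
| E_fail s : eval Fail s Failed.

(* "P terminates on s": every execution of P from s is finite
   (no infinite computation, including inside loops and conditions). *)
Inductive terminates : cmd -> state V E -> Prop :=
| T_call rs s : terminates (Call rs) s
| T_seq c1 c2 s : terminates c1 s ->
    (forall s1, eval c1 s (Ok s1) -> terminates c2 s1) -> terminates (Seq c1 c2) s
| T_alap c s : terminates c s ->
    (forall s1, eval c s (Ok s1) -> terminates (Alap c) s1) -> terminates (Alap c) s
| T_try c p q s : terminates c s ->
    (forall s1, eval c s (Ok s1) -> terminates p s1) ->
    (eval c s Failed -> terminates q s) -> terminates (Try c p q) s
| T_if c p q s : terminates c s ->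
    (forall s1, eval c s (Ok s1) -> terminates p s) ->
    (eval c s Failed -> terminates q s) -> terminates (If c p q) s
| T_skip s : terminates Skip s
| T_break s : terminates Break s
| T_fail s : terminates Fail s.

End Semantics.

Definition r_init := Rule1 (NSpec (Some NGrey) false (Some NRed) true).
Definition r_unroot := Rule1 (NSpec (Some NRed) true (Some NBlue) false).
Definition r_set_flag := Rule1 (NSpec (Some NRed) true (Some NGreen) true).
Definition r_flag := Rule1 (NSpec (Some NGreen) true (Some NGreen) true).
Definition r_next_edge := Rule2 (NSpec (Some NRed) true (Some NRed) true)
                                (NSpec None false None false) (ESpec EUnmarked ERed).
Definition r_ignore := Rule2 (NSpec (Some NRed) true (Some NRed) true)
                             (NSpec (Some NBlue) false (Some NBlue) false) (ESpec ERed EBlue).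
Definition r_move := Rule2 (NSpec (Some NRed) true (Some NRed) false)
                           (NSpec (Some NGrey) false (Some NRed) true) (ESpec ERed EDashed).
Definition r_back := Rule2 (NSpec (Some NRed) false (Some NRed) true)
                           (NSpec (Some NRed) true (Some NBlue) false) (ESpec EDashed EBlue).
Definition r_loop := RuleLoop (NSpec (Some NRed) true (Some NGreen) true)
                              (ESpec EUnmarked EUnmarked).

Definition call1 r := Call [:: r].

(* DFS = try next_edge then (try {move, ignore} else (set_flag; break))
         else (try loop; try back else break) *)
Definition DFS : cmd :=
  Try (call1 r_next_edge)
      (Try (Call [:: r_move; r_ignore]) Skip (Seq (call1 r_set_flag) Break))
      (Seq (Try (call1 r_loop) Skip Skip) (Try (call1 r_back) Skip Break)).

Definition Check : cmd := If (call1 r_flag) Fail Skip.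

(* Main = (init; DFS!; try unroot else break)!; Check *)
Definition is_dag : cmd :=
  Seq (Alap (Seq (call1 r_init) (Seq (Alap DFS) (Try (call1 r_unroot) Skip Break))))
      Check.

(* Main.v *)
Require Import Defs.
From mathcomp Require Import all_boot zify.

Set Implicit Arguments.
Unset Strict Implicit.
Unset Printing Implicit Defensive.

Section Proofs.
Variables (V E : finType) (G : hgraph V E).

Fixpoint cmd_all (P : rule -> bool) (c : cmd) : Prop :=
  match c with
  | Call rs => forall r, List.In r rs -> P r
  | Seq a b => cmd_all P a /\ cmd_all P b
  | Alap a => cmd_all P a
  | Try a b d => [/\ cmd_all P a, cmd_all P b & cmd_all P d]
  | If a b d => [/\ cmd_all P a, cmd_all P b & cmd_all P d]
  | _ => True
  end.

Lemma eval_mono (R : state V E -> state V E -> Prop) (P : rule -> bool) :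
  (forall s, R s s) -> (forall a b c, R a b -> R b c -> R a c) ->
  (forall r s s', P r -> apply_rule G r s s' -> R s' s) ->
  forall c s o, eval G c s o -> cmd_all P c ->
  forall s', (o = Ok s' \/ o = Brk s') -> R s' s.
Proof.
move=> Rr Rt HP c s o H; elim: H => /=.
- move=> rs r s0 s1 Hin Ha Hall s' [[<-]|//]; exact: (HP r _ _ (Hall r Hin) Ha).
- by move=> rs s0 _ _ s' [].
- move=> c1 c2 s0 s1 o0 _ IH1 _ IH2 [A B] s' Ho.
  exact: (Rt _ _ _ (IH2 B s' Ho) (IH1 A s1 (or_introl erefl))).
- by move=> c1 c2 s0 _ _ _ s' [].
- move=> c1 c2 s0 s1 _ IH1 [A B] s' [//|[<-]]; exact: IH1 A s1 (or_intror erefl).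
- move=> c1 s0 s1 o0 _ IH1 _ IH2 A s' Ho.
  exact: (Rt _ _ _ (IH2 A s' Ho) (IH1 A s1 (or_introl erefl))).
- by move=> c1 s0 _ _ _ s' [[<-]|].
- by move=> c1 s0 s1 _ IH1 A s' [[<-]|//]; exact: IH1 A s1 (or_intror erefl).
- move=> c1 p q s0 s1 o0 _ IH1 _ IH2 [A B C] s' Ho.
  exact: (Rt _ _ _ (IH2 B s' Ho) (IH1 A s1 (or_introl erefl))).
- move=> c1 p q s0 o0 _ _ _ IH2 [A B C] s' Ho; exact: IH2 C s' Ho.
- move=> c1 p q s0 s1 _ IH1 [A B C] s' [//|[<-]]; exact: IH1 A s1 (or_intror erefl).
- move=> c1 p q s0 s1 o0 _ _ _ IH2 [A B C] s' Ho; exact: IH2 B s' Ho.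
- move=> c1 p q s0 o0 _ _ _ IH2 [A B C] s' Ho; exact: IH2 C s' Ho.
- move=> c1 p q s0 s1 _ IH1 [A B C] s' [//|[<-]]; exact: IH1 A s1 (or_intror erefl).
- by move=> s0 _ s' [[<-]|].
- by move=> s0 _ s' [|[<-]].
- by move=> s0 _ s' [].
Qed.

Definition ew (m : emark) : nat :=
  match m with EUnmarked => 3 | ERed => 2 | EDashed => 1 | _ => 0 end.
Definition wsum (s : state V E) : nat := \sum_(e : E) ew (em s e).

Lemma wsum_upd es e s :
  wsum (upd_edge es e s) + ew (em s e) = wsum s + ew (re es).
Proof.
rewrite /wsum (bigD1 e) //= (bigD1 e (P := xpredT)) //= eqxx.
rewrite (eq_bigr (fun x => ew (em s x))); first by lia.
by move=> x /negbTE ->.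
Qed.

Definition wle (r : rule) : bool :=
  match r with Rule1 _ => true | RuleLoop _ es | Rule2 _ _ es => ew (re es) <= ew (le es) end.
Definition wlt (r : rule) : bool :=
  match r with Rule1 _ => false | RuleLoop _ es | Rule2 _ _ es => ew (re es) < ew (le es) end.

Lemma apply_wle r s s' : wle r -> apply_rule G r s s' -> wsum s' <= wsum s.
Proof.
move=> W H; case: H W => /=.
- by [].
- move=> ns es s0 v e _ _ _ He W.
  have := wsum_upd es e (upd_node ns v s0); rewrite /= He => Hw.
  have : wsum (upd_edge es e (upd_node ns v s0)) + ew (le es) <= wsum s0 + ew (le es).
    by rewrite Hw leq_add2l.
  by rewrite leq_add2r.
- move=> n1 n2 es s0 v1 v2 e _ _ _ _ _ He W.
  have := wsum_upd es e (upd_node n2 v2 (upd_node n1 v1 s0)); rewrite /= He => Hw.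
  have : wsum (upd_edge es e (upd_node n2 v2 (upd_node n1 v1 s0))) + ew (le es)
     <= wsum s0 + ew (le es).
    by rewrite Hw leq_add2l.
  by rewrite leq_add2r.
Qed.

Lemma apply_wlt r s s' : wlt r -> apply_rule G r s s' -> wsum s' < wsum s.
Proof.
move=> W H; case: H W => /=.
- by [].
- move=> ns es s0 v e _ _ _ He W.
  have := wsum_upd es e (upd_node ns v s0); rewrite /= He => Hw.
  have : wsum (upd_edge es e (upd_node ns v s0)) + ew (le es) < wsum s0 + ew (le es).
    by rewrite Hw ltn_add2l.
  by rewrite ltn_add2r.
- move=> n1 n2 es s0 v1 v2 e _ _ _ _ _ He W.
  have := wsum_upd es e (upd_node n2 v2 (upd_node n1 v1 s0)); rewrite /= He => Hw.
  have : wsum (upd_edge es e (upd_node n2 v2 (upd_node n1 v1 s0))) + ew (le es)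
     < wsum s0 + ew (le es).
    by rewrite Hw ltn_add2l.
  by rewrite ltn_add2r.
Qed.

Definition isgrey (m : nmark) : bool := if m is NGrey then true else false.
Definition greyset (s : state V E) : {set V} := [set v | isgrey (nm s v)].
Definition ngs (n : nspec) : bool := if rn n is Some m then ~~ isgrey m else true.
Definition ngr (r : rule) : bool :=
  match r with Rule1 n => ngs n | RuleLoop n _ => ngs n | Rule2 n1 n2 _ => ngs n1 && ngs n2 end.

Lemma upd_node_grey ns v s : ngs ns -> greyset (upd_node ns v s) \subset greyset s.
Proof.
move=> N; apply/subsetP => x; rewrite !inE /=.
case: eqP => [->|//]; move: N; rewrite /ngs; case: (rn ns) => [m|//] /negbTE -> //.
Qed.

Lemma apply_grey r s s' : ngr r -> apply_rule G r s s' -> greyset s' \subset greyset s.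
Proof.
move=> W H; case: H W => /=.
- by move=> ns s0 v _ N; apply: upd_node_grey.
- by move=> ns es s0 v e _ _ _ _ N; apply: upd_node_grey.
- move=> n1 n2 es s0 v1 v2 e _ _ _ _ _ _ /andP[N1 N2].
  exact: subset_trans (upd_node_grey _ _ N2) (upd_node_grey _ _ N1).
Qed.

Fixpoint noloop (c : cmd) : bool :=
  match c with
  | Alap _ => false
  | Seq a b => noloop a && noloop b
  | Try a b d | If a b d => [&& noloop a, noloop b & noloop d]
  | _ => true
  end.

Lemma noloop_term c : noloop c -> forall s, terminates G c s.
Proof.
elim: c => //=.
- by move=> rs _ s; constructor.
- move=> a IHa b IHb /andP[A B] s; constructor; auto.
- move=> a IHa b IHb d IHd /and3P[A B D] s; constructor; auto.
- move=> a IHa b IHb d IHd /and3P[A B D] s; constructor; auto.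
- by move=> _ s; constructor.
- by move=> _ s; constructor.
- by move=> _ s; constructor.
Qed.

Lemma call1_inv r s o : eval G (call1 r) s o -> forall s', o = Ok s' -> apply_rule G r s s'.
Proof.
move=> H; inversion H; subst => t // [<-].
by case: H1 => [->|[]].
Qed.

Ltac solve_all :=
  repeat (match goal with
  | |- _ /\ _ => split
  | |- and3 _ _ _ => split
  | |- True => exact I
  | |- cmd_all _ _ => unfold call1; simpl
  | |- forall r : rule, _ =>
      let r := fresh in let Hr := fresh in intros r Hr; simpl in Hr;
      repeat (destruct Hr as [<-|Hr]; [reflexivity|]); destruct Hr
  end).

Lemma w_mono c s s' : eval G c s (Ok s') -> cmd_all wle c -> wsum s' <= wsum s.
Proof.
move=> H A.
apply: (@eval_mono (fun a b => wsum a <= wsum b) wle _ _ _ _ _ _ H A s' (or_introl erefl)).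
- by [].
- by move=> a b c0; apply: leq_trans.
- by move=> r a b Hr Ha; apply: apply_wle Hr Ha.
Qed.

Lemma g_mono c s s' : eval G c s (Ok s') -> cmd_all ngr c -> greyset s' \subset greyset s.
Proof.
move=> H A.
apply: (@eval_mono (fun a b => greyset a \subset greyset b) ngr _ _ _ _ _ _ H A s' (or_introl erefl)).
- by [].
- by move=> a b c0; apply: subset_trans.
- by move=> r a b Hr Ha; apply: apply_grey Hr Ha.
Qed.

Lemma dfs_dec s s' : eval G DFS s (Ok s') -> wsum s' < wsum s.
Proof.
move=> H; inversion H; subst.
- have A := call1_inv H5 erefl.
  have L1 : wsum s1 < wsum s by apply: apply_wlt A.
  have L2 : wsum s' <= wsum s1 by apply: w_mono H6 _; solve_all.
  exact: leq_ltn_trans L2 L1.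
- inversion H6; subst.
  have L1 : wsum s1 <= wsum s by apply: w_mono H2 _; solve_all.
  inversion H7; subst.
  + have A := call1_inv H9 erefl.
    have L2 : wsum s2 < wsum s1 by apply: apply_wlt A.
    inversion H10; subst.
    exact: leq_trans L2 L1.
  + match goal with Hb : eval G Break _ _ |- _ => inversion Hb end.
Qed.

Lemma term_dfs n s : wsum s < n -> terminates G (Alap DFS) s.
Proof.
elim: n s => // n IH s Hs; constructor.
- by apply: noloop_term.
- move=> s1 H1; apply: IH; have := dfs_dec H1; move: Hs; rewrite ltnS => Hs Hl.
  exact: leq_trans Hl Hs.
Qed.

Definition Body := Seq (call1 r_init) (Seq (Alap DFS) (Try (call1 r_unroot) Skip Break)).

Lemma body_dec s s' : eval G Body s (Ok s') -> #|greyset s'| < #|greyset s|.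
Proof.
move=> H; inversion H; subst.
have A := call1_inv H2 erefl.
have L2 : greyset s' \subset greyset s1 by apply: g_mono H5 _; solve_all.
have L1 : greyset s1 \proper greyset s.
  inversion A; subst; apply/properP; split.
  - apply/subsetP => x; rewrite !inE /=; case: eqP => // ->.
  - exists v; case: H1 => /= Hv _; first by rewrite inE Hv.
    by rewrite inE /= eqxx.
apply: leq_ltn_trans (subset_leq_card L2) (proper_card L1).
Qed.

Lemma term_outer n s : #|greyset s| < n -> terminates G (Alap Body) s.
Proof.
elim: n s => // n IH s Hs; constructor.
- constructor; first constructor.
  move=> s1 _; constructor; first exact: (term_dfs (ltnSn _)).
  by move=> s2 _; apply: noloop_term.
- move=> s1 H1; apply: IH; have := body_dec H1; move: Hs; rewrite ltnS => Hs Hl.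
  exact: leq_trans Hl Hs.
Qed.

End Proofs.

Theorem mainTheorem6 (V E : finType) (G : hgraph V E) (s : state V E) :
  (forall v, nm s v = NGrey) -> (forall v, rt s v = false) ->
  (forall e, em s e = EUnmarked) ->
  terminates G is_dag s.
Proof.
move=> _ _ _; constructor.
- exact: (term_outer G (ltnSn _)).
- by move=> s1 _; apply: noloop_term.
Qed.
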